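(* For all real $s,t\in(0,\infty)$, every integer $n\ge 2$ and every $\sigma\in(0,2]$, $$n\,t^{n+\sigma}-(n+\sigma)\,t^n s^{\sigma}+\sigma\, s^{n+\sigma}\ \ge\ \sigma\, s^{n+\sigma-2}(t-s)^2 .$$ *)

(* Defs.v *)
From Stdlib Require Import Reals.

(* Main.v *)
Require Import Defs.
From Stdlib Require Import Reals Lra Lia Psatz.
Open Scope R_scope.

Lemma xlog (u : R) : exp u * u - exp u + 1 >= 0.
Proof.
  pose proof (exp_ineq1_le (-u)) as H.
  assert (E : exp (-u) * exp u = 1) by (rewrite <- exp_plus; replace (-u+u) with 0 by ring; apply exp_0).
  pose proof (exp_pos u). nra.
Qed.

Lemma sgn (u : R) : u * (exp u - 1) >= 0.
Proof.
  pose proof (exp_ineq1_le u).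
  destruct (Rle_dec 0 u).
  - nra.
  - assert (exp u < exp 0) by (apply exp_increasing; lra). rewrite exp_0 in H0. nra.
Qed.

Lemma mono (u : R) (n : nat) : (2 <= n)%nat ->
  exp u ^ n * (INR n * u - 1) >= exp u ^ 2 * (2 * u - 1).
Proof.
  intro hn. induction hn.
  - simpl. lra.
  - rewrite S_INR. simpl pow.
    pose proof (xlog u). pose proof (sgn u).
    assert (0 <= INR m) by apply pos_INR.
    assert (0 < exp u ^ m) by (apply pow_lt; apply exp_pos).
    assert (exp u * (exp u ^ m * ((INR m + 1) * u - 1)) - exp u ^ m * (INR m * u - 1)
      = exp u ^ m * ((exp u * u - exp u + 1) + INR m * (u * (exp u - 1)))) by ring.
    assert (0 <= exp u ^ m * ((exp u * u - exp u + 1) + INR m * (u * (exp u - 1)))).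
    { apply Rmult_le_pos; [lra|]. pose proof (Rmult_le_pos (INR m) (u * (exp u - 1))). nra. }
    lra.
Qed.

Lemma norm (u : R) (n : nat) (sigma : R) : (2 <= n)%nat -> 0 < sigma ->
  INR n * exp u ^ n * exp (sigma * u) - (INR n + sigma) * exp u ^ n + sigma
  >= sigma * (exp u - 1) ^ 2.
Proof.
  intros hn hs.
  pose proof (exp_ineq1_le (sigma * u)).
  pose proof (mono u n hn). pose proof (xlog u).
  assert (0 < exp u ^ n) by (apply pow_lt; apply exp_pos).
  assert (2 <= INR n) by (replace 2 with (INR 2) by (simpl; lra); apply le_INR; auto).
  assert (INR n * exp u ^ n * exp (sigma * u) >= INR n * exp u ^ n * (1 + sigma * u)).
  { apply Rle_ge. apply Rmult_le_compat_l; [nra|lra]. }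
  assert (sigma * (exp u ^ n * (INR n * u - 1)) >= sigma * (exp u ^ 2 * (2 * u - 1))).
  { apply Rle_ge, Rmult_le_compat_l; lra. }
  assert (0 <= sigma * (2 * exp u * (exp u * u - exp u + 1))).
  { apply Rmult_le_pos; [lra|]. pose proof (exp_pos u). nra. }
  nra.
Qed.

Theorem lemma2p2 (s t : R) (n : nat) (sigma : R)
  (hs : 0 < s) (ht : 0 < t) (hn : (2 <= n)%nat)
  (hsig0 : 0 < sigma) (hsig2 : sigma <= 2) :
  INR n * Rpower t (INR n + sigma)
    - (INR n + sigma) * t ^ n * Rpower s sigma
    + sigma * Rpower s (INR n + sigma)
  >= sigma * Rpower s (INR n + sigma - 2) * (t - s) ^ 2.
Proof.
  set (u := ln t - ln s).
  assert (Hlt : ln t = ln s + u) by (unfold u; ring).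
  assert (Ht : t = s * exp u).
  { unfold u. unfold Rminus. rewrite exp_plus, exp_Ropp, !exp_ln by auto. field. lra. }
  assert (Hpn : exp (INR n * u) = exp u ^ n).
  { rewrite <- Rpower_pow by apply exp_pos. unfold Rpower. rewrite ln_exp. auto. }
  assert (H1 : Rpower t (INR n + sigma) = s ^ n * Rpower s sigma * (exp u ^ n * exp (sigma * u))).
  { rewrite <- Hpn. unfold Rpower. rewrite Hlt, <- (Rpower_pow n s hs). unfold Rpower.
    rewrite <- !exp_plus. f_equal. ring. }
  assert (H2 : Rpower s (INR n + sigma) = s ^ n * Rpower s sigma).
  { rewrite Rpower_plus, Rpower_pow by auto. auto. }
  assert (H3 : Rpower s (INR n + sigma - 2) * s ^ 2 = s ^ n * Rpower s sigma).
  { rewrite <- H2. rewrite <- (Rpower_pow 2 s hs), <- Rpower_plus. f_equal. simpl. ring. }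
  assert (Htn : t ^ n = s ^ n * exp u ^ n) by (rewrite Ht; apply Rpow_mult_distr).
  rewrite H1, H2, Htn.
  replace (sigma * Rpower s (INR n + sigma - 2) * (t - s) ^ 2)
    with (sigma * (Rpower s (INR n + sigma - 2) * s ^ 2) * (exp u - 1) ^ 2)
    by (rewrite Ht; ring).
  rewrite H3.
  pose proof (norm u n sigma hn hsig0).
  assert (0 < s ^ n * Rpower s sigma) by (apply Rmult_lt_0_compat; [apply pow_lt; auto | apply exp_pos]).
  apply Rle_ge.
  replace (sigma * (s ^ n * Rpower s sigma) * (exp u - 1) ^ 2)
    with ((s ^ n * Rpower s sigma) * (sigma * (exp u - 1) ^ 2)) by ring.
  replace (INR n * (s ^ n * Rpower s sigma * (exp u ^ n * exp (sigma * u))) -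
   (INR n + sigma) * (s ^ n * exp u ^ n) * Rpower s sigma + sigma * (s ^ n * Rpower s sigma))
    with ((s ^ n * Rpower s sigma) * (INR n * exp u ^ n * exp (sigma * u) - (INR n + sigma) * exp u ^ n + sigma)) by ring.
  apply Rmult_le_compat_l; lra.
Qed.
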